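(* Let $X$ and $\Sigma$ be finite alphabets, let $A$ be a $P(X)$-automaton over $\Sigma$ with state set $Q$ accepting the language $L \subseteq \Sigma^*$, each of whose edges is labelled by a pair $(y, a)$ with $y \in \{\epsilon\} \cup X \cup \{x^{-1} : x \in X\}$ and $a \in \Sigma \cup \{\epsilon\}$. Let $\#$ be a new symbol not in $X$, put $X^\# = X \cup \{\#\}$, and let $A'$ be the finite automaton with edges labelled by elements of $(\overline{X^\#})^* \times \Sigma^*$ constructed as follows: its state set is $Q_+ \cup Q_-$, where $Q_+ = \{q_+ : q \in Q\}$ and $Q_- = \{q_- : q \in Q\}$ are disjoint copies of $Q$; its start state is $q_+$ where $q$ is the start state of $A$; its final states are the $q_-$ with $q$ a final state of $A$; it has an edge from $p_+$ to $q_+$ labelled $(x\#, a)$ whenever $A$ has an edge from $p$ to $q$ labelled $(x,a)$ with $x \in X$; an edge from $p_-$ to $q_+$ labelled $(x^{-1}\#, a)$ whenever $A$ has an edge from $p$ to $q$ labelled $(x^{-1}, a)$ with $x \in X$; an edge from $p_+$ to $q_+$ labelled $(\epsilon, a)$ whenever $A$ has an edge from $p$ to $q$ labelled $(\epsilon, a)$; for each $q \in Q$ an edge from $q_+$ to $q_-$ labelled $(\epsilon,\epsilon)$; and for each $q \in Q$ a loop at $q_-$ labelled $(\#^{-1}, \epsilon)$. Then $A'$, interpreted as a free group automaton (i.e. an $F(X^\#)$-automaton, first components read in $F(X^\#)$), accepts exactly $L$, and $A'$, interpreted as a polycyclic monoid automaton (a $P(X^\#)$-automaton), also accepts exactly 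$L$.
   Context: For a monoid $M$ with identity $1$ and a finite alphabet $\Sigma$, an $M$-automaton over $\Sigma$ is a finite directed graph whose edges are labelled by elements of $M \times \Sigma^*$, with an initial vertex and a set of terminal vertices; a word $w \in \Sigma^*$ is accepted if some path from the initial vertex to a terminal vertex has label (product of edge labels in $M \times \Sigma^*$) equal to $(1,w)$. For an alphabet $Y$, $\overline{Y} = \{y, y^{-1} : y \in Y\}$; letters of $Y$ are positive generators and letters $y^{-1}$ negative generators. The polycyclic monoid $P(Y)$ is the monoid of partial functions on $Y^*$ (composed left to right: $fg$ means apply $f$ then $g$) generated by $y: w \mapsto wy$ (defined everywhere) and $y^{-1}: wy \mapsto w$ (defined on $Y^*y$), $y \in Y$; a word over $\overline{Y}$ thus represents an element of $P(Y)$, and $\epsilon$ represents the identity. $F(Y)$ is the free group on $Y$, with presentation $\langle \overline{Y} \mid yy^{-1} = y^{-1}y = 1 \ (y \in Y)\rangle$. A word $u \in \overline{Y}^*$ labelling an edge is interpreted as the element of $P(Y)$ or $F(Y)$ it represents. *)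

(* Defs.v *)
From mathcomp Require Import all_boot.
From Stdlib Require Import Relations.
From Stdlib Require List.
Set Implicit Arguments. Unset Strict Implicit. Unset Printing Implicit Defensive.

(* Letters of the signed alphabet \overline{Y}: (y, true) = y, (y, false) = y^-1. *)
Definition sletter (Y : Type) := (Y * bool)%type.

(* Action of a single generator on an (optional) word of Y^* :
   y : w |-> w y (everywhere defined); y^-1 : w y |-> w (defined on Y^* y). *)
Definition pstep (Y : eqType) (o : option (seq Y)) (l : sletter Y) : option (seq Y) :=
  match o with
  | None => None
  | Some w =>
      if l.2 then Some (rcons w l.1)
      else match rev w with
           | y :: r => if y == l.1 then Some (rev r) else None
           | [::] => None
           end
  end.

Definition pact (Y : eqType) (u : seq (sletter Y)) (w : seq Y) : option (seq Y) :=
  foldl (@pstep Y) (Some w) u.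

Definition P_one (Y : eqType) (u : seq (sletter Y)) : Prop :=
  forall w : seq Y, pact u w = Some w.

Inductive fstep (Y : Type) : seq (sletter Y) -> seq (sletter Y) -> Prop :=
| fstep_ins (u v : seq (sletter Y)) (y : Y) (b : bool) :
    fstep (u ++ v) (u ++ (y, b) :: (y, ~~ b) :: v).

Definition F_one (Y : Type) (u : seq (sletter Y)) : Prop :=
  clos_refl_sym_trans _ (@fstep Y) u [::].

Definition edge (Q Y Sigma : Type) :=
  (Q * (seq (sletter Y) * seq Sigma) * Q)%type.

Record automaton (Q Y Sigma : Type) := Automaton {
  a_start : Q;
  a_final : Q -> bool;
  a_edges : seq (edge Q Y Sigma)
}.

Fixpoint is_path (Q Y Sigma : Type) (E : seq (edge Q Y Sigma)) (p q : Q)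
    (es : seq (edge Q Y Sigma)) : Prop :=
  match es with
  | [::] => p = q
  | e :: es' => List.In e E /\ e.1.1 = p /\ is_path E e.2 q es'
  end.

Definition path_label (Q Y Sigma : Type) (es : seq (edge Q Y Sigma)) :
    seq (sletter Y) * seq Sigma :=
  (flatten (map (fun e => e.1.2.1) es), flatten (map (fun e => e.1.2.2) es)).

(* Acceptance for an M-automaton, where [one u] says u represents 1 in M. *)
Definition accepts (Q Y Sigma : Type) (one : seq (sletter Y) -> Prop)
    (A : automaton Q Y Sigma) (w : seq Sigma) : Prop :=
  exists (es : seq (edge Q Y Sigma)) (q : Q),
    is_path (a_edges A) (a_start A) q es /\ a_final A q /\
    one (path_label es).1 /\ (path_label es).2 = w.

Definition P_accepts (Q : Type) (Y : eqType) (Sigma : Type) (A : automaton Q Y Sigma) :=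
  accepts (@P_one Y) A.
Definition F_accepts (Q Y Sigma : Type) (A : automaton Q Y Sigma) :=
  accepts (@F_one Y) A.

(* X^# = option X, with None playing the role of the new symbol #.
   States: Q + Q, with inl q = q_+ and inr q = q_-. *)
Definition hash_edge (Q X Sigma : Type) (e : edge Q X Sigma) :
    seq (edge (Q + Q) (option X) Sigma) :=
  let: (p, (y, a), q) := e in
  match y with
  | [::] => [:: (inl p, ([::], a), inl q)]
  | [:: (x, true)] => [:: (inl p, ([:: (Some x, true); (None, true)], a), inl q)]
  | [:: (x, false)] => [:: (inr p, ([:: (Some x, false); (None, true)], a), inl q)]
  | _ => [::]
  end.

Definition hash_automaton (Q : finType) (X Sigma : Type) (A : automaton Q X Sigma) :
    automaton (Q + Q) (option X) Sigma :=
  {| a_start := inl (a_start A);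
     a_final := fun s => match s with inl _ => false | inr q => a_final A q end;
     a_edges := flatten (map (@hash_edge Q X Sigma) (a_edges A))
                ++ [seq (inl q, ([::], [::]), inr q) | q <- enum Q]
                ++ [seq (inr q, ([:: (None, false)], [::]), inr q) | q <- enum Q] |}.

(* Main.v *)
Require Import Defs.
From mathcomp Require Import all_boot.
From Stdlib Require Import Relations.
From Stdlib Require List.
Set Implicit Arguments. Unset Strict Implicit. Unset Printing Implicit Defensive.

Lemma InP (T : eqType) (x : T) (s : seq T) : List.In x s <-> x \in s.
Proof.
elim: s => [|y s IH] //=; rewrite in_cons; split.
- by case=> [->|/IH ->]; rewrite ?eqxx ?orbT.
- by case/orP=> [/eqP ->|/IH]; [left|right].
Qed.

Lemma foldl_None (Y : eqType) (u : seq (sletter Y)) : foldl (@pstep Y) None u = None.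
Proof. by elim: u. Qed.

Lemma pact_cons (Y : eqType) l u (S : seq Y) :
  pact (l :: u) S = if pstep (Some S) l is Some S' then pact u S' else None.
Proof.
rewrite /pact; have -> : foldl (@pstep Y) (Some S) (l :: u) = foldl (@pstep Y) (pstep (Some S) l) u by [].
case: (pstep (Some S) l) => //; exact: foldl_None.
Qed.

Lemma pact_cat (Y : eqType) u v (S : seq Y) :
  pact (u ++ v) S = if pact u S is Some S' then pact v S' else None.
Proof. rewrite /pact foldl_cat; case: (foldl _ _ u) => //=; exact: foldl_None. Qed.


Lemma pstep_neg_some (Y : eqType) (S T : seq Y) y :
  pstep (Some S) (y, false) = Some T -> S = rcons T y.
Proof.
case/lastP: S => [|S z] //=; rewrite rev_rcons revK.
by case: eqP => // -> [<-].
Qed.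

Lemma pact_shift (Y : eqType) u (s t w : seq Y) :
  pact u s = Some t -> pact u (w ++ s) = Some (w ++ t).
Proof.
elim: u s => [|[y b] u IH] s /=; first by rewrite /pact /= => -[->].
rewrite !pact_cons; case: b.
- by move=> /IH; rewrite /= -rcons_cat.
- case E: (pstep (Some s) (y, false)) => [s'|] // /IH H.
  move/pstep_neg_some: E => ->; rewrite -rcons_cat /= rev_rcons eqxx revK.
  exact: H.
Qed.

Lemma P_oneE (Y : eqType) (u : seq (sletter Y)) : P_one u <-> pact u [::] = Some [::].
Proof.
split=> [H|H w]; first exact: H.
by have := pact_shift w H; rewrite !cats0.
Qed.

Lemma P_F (Y : eqType) (v : seq (sletter Y)) (s t : seq Y) :
  pact v s = Some t ->
  clos_refl_sym_trans _ (@fstep Y) (map (fun y => (y, true)) s ++ v)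
                                   (map (fun y => (y, true)) t).
Proof.
elim: v s => [|[y b] v IH] s; first by rewrite /pact /= => -[->]; rewrite cats0; apply: rst_refl.
rewrite pact_cons; case: b.
- by move=> /IH; rewrite /= map_rcons cat_rcons.
- case E: (pstep (Some s) (y, false)) => [s'|] // /IH H.
  move/pstep_neg_some: E => ->; rewrite map_rcons cat_rcons.
  apply: rst_trans H; apply: rst_sym; apply: rst_step.
  exact: (@fstep_ins Y (map (fun y => (y, true)) s') v y true).
Qed.

Lemma P_oneF (Y : eqType) (u : seq (sletter Y)) : P_one u -> F_one u.
Proof. by move/P_oneE/P_F. Qed.

Definition inv (Y : eqType) (l : sletter Y) : sletter Y := (l.1, ~~ l.2).
Definition push (Y : eqType) (l : sletter Y) s :=
  if s is l' :: r then (if l' == inv l then r else l :: s) else [:: l].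
Definition red (Y : eqType) (w : seq (sletter Y)) := foldr (@push Y) [::] w.
Fixpoint reduced (Y : eqType) (s : seq (sletter Y)) : bool :=
  if s is a :: t then (if t is b :: _ then b != inv a else true) && reduced t else true.

Lemma invK (Y : eqType) (l : sletter Y) : inv (inv l) = l.
Proof. by case: l => a b; rewrite /inv /= negbK. Qed.

Lemma push_reduced (Y : eqType) l (s : seq (sletter Y)) : reduced s -> reduced (push l s).
Proof.
case: s => [|l' r] //= /andP [H1 H2].
case: eqP => E; first exact: H2.
rewrite /= H1 H2 !andbT; exact/eqP.
Qed.

Lemma red_reduced (Y : eqType) (w : seq (sletter Y)) : reduced (red w).
Proof. by elim: w => [|l w IH] //=; apply: push_reduced. Qed.

Lemma push_inv (Y : eqType) l (s : seq (sletter Y)) : reduced s -> push l (push (inv l) s) = s.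
Proof.
case: s => [|l' r] /=; first by rewrite eqxx.
move=> /andP [H1 H2]; rewrite invK.
case: eqP => [E|E] /=.
- subst l'; case: r H1 H2 => [|l'' r'] //= H1 _; by rewrite (negbTE H1).
- by rewrite eqxx.
Qed.

Lemma red_del (Y : eqType) u l (v : seq (sletter Y)) : red (u ++ l :: inv l :: v) = red (u ++ v).
Proof. by rewrite /red !foldr_cat /= push_inv //; apply: red_reduced. Qed.

Lemma F_red (Y : eqType) (w : seq (sletter Y)) : F_one w -> red w = [::].
Proof.
rewrite /F_one => H.
suff: red w = red [::] by [].
apply: (@clos_refl_sym_trans_ind _ _ (fun x y => red x = red y)) H.
- move=> x y [u v y0 b]; by rewrite -(red_del u (y0, b) v).
- by [].
- by move=> x y _ ->.
- by move=> x y z _ -> _ ->.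
Qed.

Lemma reduced_red (Y : eqType) (w : seq (sletter Y)) : reduced w -> red w = w.
Proof.
elim: w => [|a t IH] //= /andP [H1 H2]; rewrite IH //.
by case: t H1 {IH H2} => [|b t'] //= H; rewrite (negbTE H).
Qed.

Lemma not_reduced (Y : eqType) (w : seq (sletter Y)) :
  ~~ reduced w -> exists u l v, w = u ++ l :: inv l :: v.
Proof.
elim: w => [|a t IH] //=; rewrite negb_and => /orP [H|H].
- case: t H {IH} => [|b t'] //= /negPn /eqP ->; by exists [::], a, t'.
- by case: (IH H) => u [l [v ->]]; exists (a :: u), l, v.
Qed.

(* the shape invariant *)
Definition okadj (X : eqType) (a b : sletter (option X)) : bool :=
  ~~ (~~ a.2 && b.2) || ((a.1 != None) && (b == (None, true))).
Fixpoint phi (X : eqType) (w : seq (sletter (option X))) : bool :=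
  match w with a :: ((b :: _) as t) => okadj a b && phi t | _ => true end.
Definition okh (X : eqType) (c : sletter (option X)) w :=
  if w is b :: _ then okadj c b else true.

Lemma phi_cons (X : eqType) (c : sletter (option X)) w : phi (c :: w) = okh c w && phi w.
Proof. by case: w. Qed.

Lemma phi_suffix (X : eqType) (u w : seq (sletter (option X))) : phi (u ++ w) -> phi w.
Proof. elim: u => [|c u IH] //; rewrite cat_cons phi_cons => /andP [_]; exact: IH. Qed.

Lemma okadj_trans (X : eqType) (c l d : sletter (option X)) :
  okadj c l -> okadj l (inv l) -> okadj (inv l) d -> okadj c d.
Proof.
case: c => c1 c2; case: l => l1 l2; case: d => d1 d2; rewrite /okadj /inv /=.
case: c2; case: d2 => //=; case: l2 => //=.
- by move=> /andP [_ /eqP [->]] _; rewrite eqxx.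
- by move=> _ /andP [/eqP H /eqP [H']].
Qed.

Lemma phi_del (X : eqType) u l (v : seq (sletter (option X))) :
  phi (u ++ l :: inv l :: v) -> phi (u ++ v).
Proof.
elim: u => [|c u IH]; first by rewrite !cat0s !phi_cons => /and3P [_ _ ->].
rewrite !cat_cons !phi_cons => /andP [H1 /[dup] H2 /IH ->]; rewrite andbT.
case: u H1 H2 {IH} => [|c' u'] H1 H2; last by [].
rewrite !cat0s in H1 H2 *; rewrite !phi_cons in H2; case/and3P: H2 => H3 H4 _.
move: H1 H3 H4; case: v => [|d v] //; exact: okadj_trans.
Qed.

Lemma key (X : eqType) n (w : seq (sletter (option X))) :
  size w <= n -> phi w -> red w = [::] -> forall s, pact w s = Some s.
Proof.
elim: n w => [|n IH] w.
  by case: w.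
move=> Hs Hp Hr s.
case Hw: (reduced w).
  by move: Hr; rewrite reduced_red // => ->.
case: (not_reduced (negbT Hw)) => u [l [v E]]; subst w.
have Hl : l.2.
  have : okadj l (inv l) by move/phi_suffix: Hp; rewrite phi_cons => /andP [].
  rewrite /okadj /inv /=; case: (l.2) => //=.
  by rewrite xpair_eqE andbT => /andP [/eqP H1 /eqP H2].
have IH' := IH (u ++ v).
rewrite size_cat /= !addnS ltnS -size_cat in Hs.
have {}IH' := IH' (ltnW Hs) (phi_del Hp); rewrite -(red_del u l v) in IH'.
have {}IH' := IH' Hr s.
rewrite pact_cat; move: IH'; rewrite pact_cat.
case: (pact u s) => // s'.
rewrite !pact_cons; clear -Hl; case: l Hl => l1 [] //= _.
by rewrite pact_cons /= rev_rcons eqxx revK.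
Qed.

Definition unS (X : eqType) (S : seq (option X)) : seq X := pmap id S.
Definition proj (X : eqType) (u : seq (sletter (option X))) : seq (sletter X) :=
  pmap (fun l => if l.1 is Some x then Some (x, l.2) else None) u.

Lemma unS_rcons (X : eqType) (S : seq (option X)) o :
  unS (rcons S o) = if o is Some x then rcons (unS S) x else unS S.
Proof. by rewrite /unS -cats1 pmap_cat; case: o => [x|] /=; rewrite ?cats1 ?cats0. Qed.

Lemma unS_cat (X : eqType) (S T : seq (option X)) : unS (S ++ T) = unS S ++ unS T.
Proof. exact: pmap_cat. Qed.

Lemma unS_nseq (X : eqType) n : unS (nseq n (@None X)) = [::].
Proof. by elim: n. Qed.

Lemma unS_nil (X : eqType) (S : seq (option X)) : unS S = [::] -> S = nseq (size S) None.
Proof. by elim: S => [|[z|] S IH] //= H; rewrite -IH. Qed.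

Lemma pact_proj (X : eqType) u (S T : seq (option X)) :
  pact u S = Some T -> pact (proj u) (unS S) = Some (unS T).
Proof.
elim: u S => [|[[x|] b] u IH] S; first by rewrite /pact /= => -[->].
- rewrite pact_cons; case: b.
  + by move=> /= /IH; rewrite unS_rcons /proj /= pact_cons.
  + case E: (pstep (Some S) (Some x, false)) => [S'|] // /IH H.
    move/pstep_neg_some: E => ->; rewrite /proj /= pact_cons unS_rcons /= rev_rcons eqxx revK.
    exact: H.
- rewrite pact_cons; case: b.
  + by move=> /= /IH; rewrite unS_rcons.
  + case E: (pstep (Some S) (None, false)) => [S'|] // /IH H.
    by move/pstep_neg_some: E => ->; rewrite unS_rcons.
Qed.

Lemma nseqS_r (T : Type) n (x : T) : x :: nseq n x = rcons (nseq n x) x.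
Proof. by elim: n => //= n ->. Qed.

Lemma pact_loops (X : eqType) n (S : seq (option X)) :
  pact (nseq n (None, false)) (S ++ nseq n None) = Some S.
Proof.
elim: n => [|n IH]; first by rewrite cats0.
have -> : S ++ nseq n.+1 None = rcons (S ++ nseq n None) None by rewrite rcons_cat -nseqS_r.
by rewrite pact_cons /= rev_rcons eqxx revK.
Qed.

Lemma decompS (X : eqType) (S : seq (option X)) : exists S0 n,
  S = S0 ++ nseq n None /\ (S0 = [::] \/ exists S1 z, S0 = rcons S1 (Some z)).
Proof.
elim/last_ind: S => [|S o [S0 [n [-> H]]]]; first by exists [::], 0; split; [|left].
case: o => [z|].
- exists (rcons (S0 ++ nseq n None) (Some z)), 0; rewrite cats0; split => //.
  by right; exists (S0 ++ nseq n None), z.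
- exists S0, n.+1; split => //; by rewrite rcons_cat -nseqS_r.
Qed.

Lemma label_cons (Q Y Sigma : Type) (e : edge Q Y Sigma) es :
  path_label (e :: es) = (e.1.2.1 ++ (path_label es).1, e.1.2.2 ++ (path_label es).2).
Proof. by []. Qed.

Lemma label_cat (Q Y Sigma : Type) (es1 es2 : seq (edge Q Y Sigma)) :
  path_label (es1 ++ es2) =
  ((path_label es1).1 ++ (path_label es2).1, (path_label es1).2 ++ (path_label es2).2).
Proof. by rewrite /path_label !map_cat !flatten_cat. Qed.

Lemma is_path_cat (Q Y Sigma : Type) (E : seq (edge Q Y Sigma)) p q r es1 es2 :
  is_path E p q es1 -> is_path E q r es2 -> is_path E p r (es1 ++ es2).
Proof.
elim: es1 p => [|e es1 IH] p /=; first by move=> ->.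
by case=> H1 [H2 H3] H4; split => //; split => //; apply: IH.
Qed.

Definition base (Q : Type) (s : Q + Q) : Q := match s with inl q => q | inr q => q end.

Definition loopE (Q X Sigma : Type) (q : Q) : edge (Q + Q) (option X) Sigma :=
  (inr q, ([:: (None, false)], [::]), inr q).


Lemma mem_hash (X Sigma Q : finType) (A : automaton Q X Sigma) e e' :
  List.In e (a_edges A) -> e' \in hash_edge e -> List.In e' (a_edges (hash_automaton A)).
Proof.
move=> /InP He He'; apply/InP; rewrite /= !mem_cat; apply/orP; left.
by apply/flatten_mapP; exists e.
Qed.

Lemma mem_eps (X Sigma Q : finType) (A : automaton Q X Sigma) q :
  List.In (inl q, ([::], [::]), inr q) (a_edges (hash_automaton A)).
Proof.
apply/InP; rewrite /= !mem_cat; apply/or3P; apply: Or32.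
by apply/mapP; exists q; rewrite ?mem_enum.
Qed.

Lemma mem_loop (X Sigma Q : finType) (A : automaton Q X Sigma) q :
  List.In (loopE X Sigma q) (a_edges (hash_automaton A)).
Proof.
apply/InP; rewrite /= !mem_cat; apply/or3P; apply: Or33.
by apply/mapP; exists q; rewrite ?mem_enum.
Qed.

Lemma memE' (X Sigma Q : finType) (A : automaton Q X Sigma) e :
  List.In e (a_edges (hash_automaton A)) ->
  [\/ exists2 e0, List.In e0 (a_edges A) & e \in hash_edge e0,
      exists q, e = (inl q, ([::], [::]), inr q) |
      exists q, e = loopE X Sigma q].
Proof.
move/InP; rewrite /= !mem_cat => /or3P [H|H|H].
- by apply: Or31; case/flatten_mapP: H => e0 /InP H1 H2; exists e0.
- by apply: Or32; case/mapP: H => q _ ->; exists q.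
- by apply: Or33; case/mapP: H => q _ ->; exists q.
Qed.

Lemma hashE (Q X Sigma : eqType) (p q : Q) y (a : seq Sigma) e :
  e \in @hash_edge Q X Sigma (p, (y, a), q) ->
  [\/ y = [::] /\ e = (inl p, ([::], a), inl q),
      exists x, y = [:: (x, true)] /\ e = (inl p, ([:: (Some x, true); (None, true)], a), inl q) |
      exists x, y = [:: (x, false)] /\ e = (inr p, ([:: (Some x, false); (None, true)], a), inl q)].
Proof.
case: y => [|[x [] ] [|? ?]] //=; rewrite inE => /eqP ->.
- by apply: Or31.
- by apply: Or32; exists x.
- by apply: Or33; exists x.
Qed.

Lemma back (X Sigma Q : finType) (A : automaton Q X Sigma) es' s1 s2 :
  is_path (a_edges (hash_automaton A)) s1 s2 es' ->
  exists es, is_path (a_edges A) (base s1) (base s2) es /\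
    (path_label es).1 = proj (path_label es').1 /\ (path_label es).2 = (path_label es').2.
Proof.
elim: es' s1 => [|e es' IH] s1 /=.
  by move=> ->; exists [::].
case=> HE [He1 /IH [es [Hp [H1 H2]]]].
case: (memE' HE) => [[[[p [y a]] q] He0 Hin]|[q Eq]|[q Eq]]; subst s1; try subst e.
- case: (hashE Hin) => [[Ey Ee]|[x [Ey Ee]]|[x [Ey Ee]]]; subst;
  [exists ((p, ([::], a), q) :: es)|exists ((p, ([:: (x,true)], a), q) :: es)|
   exists ((p, ([:: (x,false)], a), q) :: es)];
  rewrite /path_label /= in H1 H2 *; rewrite H1 H2; by split.
- by exists es.
- by exists es; rewrite /path_label /= in H1 H2 *; rewrite H1 H2.
Qed.

Definition hneg (X : eqType) (w : seq (sletter (option X))) :=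
  if w is b :: _ then ~~ b.2 else true.

Lemma path_phi (X Sigma Q : finType) (A : automaton Q X Sigma) es' s1 s2 :
  is_path (a_edges (hash_automaton A)) s1 s2 es' ->
  phi (path_label es').1 && (if s1 is inr _ then hneg (path_label es').1 else true).
Proof.
elim: es' s1 => [|e es' IH] s1.
  by move=> _; case: s1.
case=> HE [He1 /IH]; rewrite label_cons.
case: (memE' HE) => [[[[p [y a]] q] He0 Hin]|[q Eq]|[q Eq]]; subst s1; try subst e.
- case: (hashE Hin) => [[Ey Ee]|[x [Ey Ee]]|[x [Ey Ee]]]; subst;
  move: (path_label es').1 => L /andP [H _].
  + by rewrite H.
  + rewrite [X in phi X]/= !phi_cons H andbT.
    by case: L H.
  + rewrite [X in phi X]/= !phi_cons H andbT /=.
    by case: L H.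
- by move: (path_label es').1 => L /andP [H _]; rewrite H.
- move: (path_label es').1 => L /andP [H1 H2].
  rewrite [X in phi X]/= phi_cons H1 andbT /=.
  by case: L H1 H2 => [|[d1 d2] w] //= _ /negbTE ->.
Qed.

Lemma loops_path (X Sigma Q : finType) (A : automaton Q X Sigma) n q :
  is_path (a_edges (hash_automaton A)) (inr q) (inr q) (nseq n (loopE X Sigma q)).
Proof. elim: n => [|n IH] //=; split; [exact: mem_loop | by split]. Qed.

Lemma loops_label (X Sigma Q : Type) n (q : Q) :
  path_label (nseq n (loopE X Sigma q)) = (nseq n (None, false), [::]).
Proof. by elim: n => [|n IH] //; rewrite -[nseq n.+1 _]/(_ :: nseq n _) label_cons IH. Qed.

Lemma fwd (X Sigma Q : finType) (A : automaton Q X Sigma) :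
  (forall e, List.In e (a_edges A) -> size e.1.2.1 <= 1 /\ size e.1.2.2 <= 1) ->
  forall es p q, is_path (a_edges A) p q es ->
  forall S t, pact (path_label es).1 (unS S) = Some t ->
  exists es' S', is_path (a_edges (hash_automaton A)) (inl p) (inl q) es' /\
    (path_label es').2 = (path_label es).2 /\
    pact (path_label es').1 S = Some S' /\ unS S' = t.
Proof.
move=> Hsz; elim=> [|e es IH] p q.
  by move=> -> S t; rewrite /pact /= => -[<-]; exists [::], S.
case=> HE [He1 Hp] S t; rewrite label_cons.
move: e HE He1 Hp => [[p0 [y a]] q0] HE He1 Hp; simpl in He1, Hp; subst p0.
have [Hy _] := Hsz _ HE.
have mh : forall e', e' \in hash_edge (p, (y, a), q0) -> List.In e' (a_edges (hash_automaton A))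
  := fun e' => mem_hash HE.
rewrite [(_, _).1.2.1]/=.
case: y Hy HE mh => [|[x b] [|? ?]] // Hy HE mh.
- move=> H; case: (IH _ _ Hp _ _ H) => es' [S' [P1 [P2 [P3 P4]]]].
  exists ((inl p, ([::], a), inl q0) :: es'), S'.
  rewrite label_cons; split; [|split; [exact: (congr1 (cat a) P2)|by split]].
  by split; [apply: mh; exact: mem_head|split].
- case: b Hy HE mh => Hy HE mh.
  + rewrite pact_cons => H; simpl in H.
    have := IH _ _ Hp (rcons (rcons S (Some x)) None) t.
    rewrite !unS_rcons => /(_ H) [es' [S' [P1 [P2 [P3 P4]]]]].
    exists ((inl p, ([:: (Some x, true); (None, true)], a), inl q0) :: es'), S'.
    rewrite label_cons; split; [|split; [exact: (congr1 (cat a) P2)|by split]].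
    by split; [apply: mh; exact: mem_head|split].
  + rewrite pact_cons => H.
    case: (decompS S) => S0 [n [ES [E0|[S1 [z E0]]]]]; subst S0 S.
      by move: H; rewrite unS_cat unS_nseq.
    move: H; rewrite unS_cat unS_nseq cats0 unS_rcons.
    case E: (pstep _ _) => [S2|] // H.
    move/pstep_neg_some/rcons_inj: E => [E1 E2]; subst S2 z.
    have := IH _ _ Hp (rcons S1 None) t; rewrite unS_rcons => /(_ H) [es' [S' [P1 [P2 [P3 P4]]]]].
    exists ((inl p, ([::], [::]), inr p) :: nseq n (loopE X Sigma p) ++
            (inr p, ([:: (Some x, false); (None, true)], a), inl q0) :: es'), S'.
    rewrite label_cons label_cat loops_label label_cons.
    split; [|split; [exact: (congr1 (cat a) P2)|]].
    * split; [exact: mem_eps|split => //].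
      apply: is_path_cat; first exact: loops_path.
      by split; [apply: mh; exact: mem_head|split].
    * rewrite cat0s pact_cat pact_loops pact_cons /= rev_rcons eqxx revK pact_cons /=.
      by rewrite P3.
Qed.


Lemma to_A (X Sigma Q : finType) (A : automaton Q X Sigma) w es' s :
  is_path (a_edges (hash_automaton A)) (a_start (hash_automaton A)) s es' ->
  a_final (hash_automaton A) s -> pact (path_label es').1 [::] = Some [::] ->
  (path_label es').2 = w -> P_accepts A w.
Proof.
move=> Hp Hf H Hw; case: s Hp Hf => [q|q] Hp Hf //.
case: (back Hp) => es [Hp' [H1 H2]].
exists es, q; split => //; split => //; split; last by rewrite H2.
by apply/P_oneE; rewrite H1; apply: (pact_proj H).
Qed.

Lemma from_A (X Sigma Q : finType) (A : automaton Q X Sigma) w :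
  (forall e, List.In e (a_edges A) -> size e.1.2.1 <= 1 /\ size e.1.2.2 <= 1) ->
  P_accepts A w -> exists es' s,
  is_path (a_edges (hash_automaton A)) (a_start (hash_automaton A)) s es' /\
  a_final (hash_automaton A) s /\ pact (path_label es').1 [::] = Some [::] /\
  (path_label es').2 = w.
Proof.
move=> Hsz [es [q [Hp [Hf [/P_oneE Hone Hw]]]]].
case: (fwd Hsz Hp (S := [::]) Hone) => es' [S' [P1 [P2 [P3 P4]]]].
have ES := unS_nil P4; move: (size S') ES => n ES.
exists (es' ++ (inl q, ([::], [::]), inr q) :: nseq n (loopE X Sigma q)), (inr q).
split; [|split => //].
  apply: is_path_cat P1 _; split; [exact: mem_eps|split => //]; exact: loops_path.
have HP : pact ((path_label es').1 ++ nseq n (None, false)) [::] = Some [::].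
  by rewrite pact_cat P3 ES -[nseq _ None]cat0s pact_loops.
rewrite label_cat label_cons loops_label; split; first exact: HP.
by rewrite /= !cats0 -Hw.
Qed.

Theorem theorem4p3 (X Sigma Q : finType) (A : automaton Q X Sigma) :
  (forall e, List.In e (a_edges A) -> size e.1.2.1 <= 1 /\ size e.1.2.2 <= 1) ->
  (forall w : seq Sigma, F_accepts (hash_automaton A) w <-> P_accepts A w) /\
  (forall w : seq Sigma, P_accepts (hash_automaton A) w <-> P_accepts A w).
Proof.
move=> Hsz; split=> w; split.
- case=> es' [s [Hp [Hf [Hone Hw]]]].
  apply: (to_A Hp Hf _ Hw).
  have /andP [Hphi _] := path_phi Hp.
  exact: (key (leqnn _) Hphi (F_red Hone)).
- move/(from_A Hsz) => [es' [s [Hp [Hf [H Hw]]]]].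
  exists es', s; split => //; split => //; split => //.
  by apply: P_oneF; apply/P_oneE.
- case=> es' [s [Hp [Hf [Hone Hw]]]].
  by apply: (to_A Hp Hf _ Hw); apply/P_oneE.
- move/(from_A Hsz) => [es' [s [Hp [Hf [H Hw]]]]].
  by exists es', s; split => //; split => //; split => //; apply/P_oneE.
Qed.
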